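(* Let $m$ be any distribution over program encodings from which one can sample. Then there is a stochastic dynamical system $U_m$ such that for every task $f$ and every system $A$ that solves $f$ there is a constant $C'_A$ (not depending on the input $x$) with $$\tau_{U_m}(x\downarrow y)\le C'_A\,2^{-\log m(A)}\,\tau_A(x\downarrow y)$$ for all inputs $x$, where $y$ is the output of $A$ on $x$. In particular, $U_m$ is a universal solver with constant $C_A=C'_A2^{-\log m(A)}$.
   Context: A stochastic dynamical system $\nu$ has transition probabilities $\nu(s_{t+1}\mid s_t)$ on a state space $\mathcal{S}$, terminating states $\mathcal{F}\subset\mathcal{S}$, an encoding $\mathrm{enc}$ of inputs into states and a decoding $\mathrm{dec}$ of terminating states into outputs. For a trajectory $h=(s_1,\dots,s_n)$, $T(h)=n$ and $\nu(h\mid x)=\prod_{t}\nu(s_{t+1}\mid s_t)$ when $s_1=\mathrm{enc}(x)$; $h\downarrow y$ means the last state is terminating and decodes to $y$. The proper time is $\tau_\nu(x\downarrow y)=\min_{h_1=\mathrm{enc}(x),\,h\downarrow y}T(h)/\nu(h\mid x)$ ($\infty$ if no such $h$). A task is a computable function $f:X\times Y\to\{0,1\}$; $y$ is a witness of $x$ if $f(x,y)=1$. A system $A$ solves $f$ if for all $x$ (having a witness) $A$ terminates from $x$ with some $y$ such that $f(x,y)=1$. A system $U$ is a universal solver if for every task $f$ and every system $A$ solving $f$ there is a constant $C_A$, depending only on $A$, with $\tau_U(x\downarrow y)\le C_A\tau_A(x\downarrow y)$ for all $x$ (the solver may be given oracle access to $f$). $m(A)$ denotes the probability that $m$ assigns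 to an encoding of $A$; logarithms are base 2. *)

(* Defs.v *)
From HB Require Import structures.
From mathcomp Require Import all_boot all_order all_algebra.
From mathcomp Require Import all_classical all_reals all_analysis.
Set Implicit Arguments. Unset Strict Implicit. Unset Printing Implicit Defensive.
Import Order.TTheory GRing.Theory Num.Theory.
Local Open Scope classical_set_scope.
Local Open Scope ring_scope.

(* A stochastic dynamical system with inputs X and outputs Y:
   state space St, transition probabilities trans s s' = nu(s' | s)
   (a probability distribution over St for every s), terminating states
   term, encoding enc of inputs and decoding dec of (terminating) states. *)
Record system (R : realType) (X : Type) (Y : Type) := System {
  St : choiceType;
  trans : St -> St -> R;
  trans_ge0 : forall s s', 0 <= trans s s';
  trans_sum1 : forall s, (esum [set: St] (fun s' => (trans s s')%:E) = 1)%E;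
  term : St -> bool;
  enc : X -> St;
  dec : St -> Y
}.

Arguments St {R X Y} A : rename.
Arguments trans {R X Y} A _ _ : rename.
Arguments term {R X Y} A _ : rename.
Arguments enc {R X Y} A _ : rename.
Arguments dec {R X Y} A _ : rename.

Section Defs.
Context (R : realType) (X Y : Type).

Fixpoint path_prob (A : system R X Y) (s : St A) (h : seq (St A)) : R :=
  if h is s' :: h' then trans A s s' * path_prob s' h' else 1.

(* proper time tau_A(x ↓ y): infimum (= minimum when it exists) of
   T(h)/nu(h | x) over trajectories h = enc x :: rest whose last state is
   terminating and decodes to y; trajectories of probability 0 contribute
   T/0 = +oo, and the infimum of the empty set is +oo. *)
Definition proper_time (A : system R X Y) (x : X) (y : Y) : \bar R :=
  ereal_inf [set ((size rest).+1%:R / path_prob (enc A x) rest)%:E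
            | rest in [set rest : seq (St A) |
                 0 < path_prob (enc A x) rest /\
                 term A (last (enc A x) rest) /\
                 dec A (last (enc A x) rest) = y]].

(* A solves the task f: from every input having a witness, A terminates
   (with positive probability, i.e. finite proper time) with a witness. *)
Definition solves (f : X -> Y -> bool) (A : system R X Y) : Prop :=
  forall x, (exists y, f x y) ->
    exists y, f x y /\ (proper_time A x y < +oo)%E.

End Defs.

Definition log2 (R : realType) (a : R) : R := ln a / ln 2.

(* Main.v *)
Require Import Defs.
From HB Require Import structures.
From mathcomp Require Import all_boot all_order all_algebra.
From mathcomp Require Import all_classical all_reals all_analysis.
From mathcomp Require Import ring lra zify.
Import Order.TTheory GRing.Theory Num.Theory.
Local Open Scope classical_set_scope.
Local Open Scope ring_scope.

Section Univ.
Context (R : realType) (X : choiceType) (Y : Type)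
    (Code : choiceType) (sys : Code -> system R X Y) (m : Code -> R)
    (m_ge0 : forall p, 0 <= m p)
    (m_sum1 : (esum [set: Code] (fun p => (m p)%:E) = 1)%E) (p0 : Code).

Definition StU : choiceType := (X + {p : Code & St (sys p)})%type.

Definition transU (a b : StU) : R :=
  match a, b with
  | inl x, inr v => m (tag v) * (tagged v == enc (sys (tag v)) x)%:R
  | inr u, inr v => if tag v == tag u then trans (sys (tag u)) (tagged u) (tagged_as u v) else 0
  | _, _ => 0
  end.

Lemma transU_ge0 a b : 0 <= transU a b.
Proof.
case: a => [x|u]; case: b => [x'|v] //=.
  by rewrite mulr_ge0.
by case: ifP => // _; apply: trans_ge0.
Qed.

Lemma esum_range (T : choiceType) (F : StU -> \bar R) (e : T -> StU) :
  injective e -> (forall b, ~ range e b -> F b = 0%E) ->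
  (esum [set: StU] F = esum [set: T] (F \o e))%E.
Proof.
move=> ei F0.
rewrite -(esum_image setT e F); last by move=> a b _ _; apply: ei.
rewrite [RHS]esum_mkcond; apply: eq_esum => b _.
case: ifPn => // /negP bn; apply: F0 => hb; apply: bn; rewrite inE; exact: hb.
Qed.

Lemma transU_sum1 a : (esum [set: StU] (fun b => (transU a b)%:E) = 1)%E.
Proof.
case: a => [x|[p s]].
  rewrite (@esum_range Code _ (fun q => inr (Tagged (fun q => St (sys q)) (enc (sys q) x)))).
  - rewrite -m_sum1; apply: eq_esum => q _ /=.
    by rewrite eqxx mulr1.
  - move=> q q' h. inversion h. done.
  - case=> [x'|[q t]] //= hn.
    case: eqP; last by rewrite mulr0.
    by move=> ht; exfalso; apply: hn; exists q => //=; rewrite ht.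
rewrite (@esum_range (St (sys p)) _ (fun t => inr (Tagged (fun q => St (sys q)) t))).
  - rewrite -(trans_sum1 s); apply: eq_esum => t _ /=.
    by rewrite eqxx tagged_asE.
  - move=> t t' h; have := congr1 (fun b : StU => match b with inr u => tagged_as (Tagged (fun q => St (sys q)) t) u | _ => t end) h; by rewrite /= !tagged_asE.
  - case=> [x'|[q t]] //= hn.
    case: eqP => // hq; exfalso; apply: hn; subst q.
    by exists t.
Qed.

Definition termU (b : StU) : bool :=
  match b with inl _ => false | inr u => term (sys (tag u)) (tagged u) end.
Definition decU (b : StU) : Y :=
  match b with inl x => dec (sys p0) (enc (sys p0) x)
             | inr u => dec (sys (tag u)) (tagged u) end.

Definition U : system R X Y :=
  @System R X Y StU transU transU_ge0 transU_sum1 termU inl decU.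

Lemma path_sim p s (rest : seq (St (sys p))) :
  path_prob (A:=U) (inr (Tagged (fun q => St (sys q)) s)) (map (fun t => inr (Tagged (fun q => St (sys q)) t) : St U) rest)
  = path_prob s rest.
Proof.
elim: rest s => [|t rest IH] s //=.
by rewrite IH /transU /= eqxx tagged_asE.
Qed.

Lemma key p (hm : 0 < m p) x y :
  (proper_time U x y <= (2 / m p)%:E * proper_time (sys p) x y)%E.
Proof.
have c0 : 0 < 2 / m p by rewrite divr_gt0.
rewrite /proper_time -ereal_inf_pZl //.
apply: le_ereal_inf_tmp => _ [_ [rest [Hpos [Hterm Hdec]] <-] <-].
apply: ge_ereal_inf.
set restU := (inr (Tagged (fun q => St (sys q)) (enc (sys p) x)) : St U) ::
   map (fun t => inr (Tagged (fun q => St (sys q)) t) : St U) rest.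
have hp : path_prob (A:=U) (enc U x) restU = m p * path_prob (enc (sys p) x) rest.
  by rewrite /= path_sim /transU /= eqxx mulr1.
have hl : last (enc U x) restU = inr (Tagged (fun q => St (sys q)) (last (enc (sys p) x) rest)).
  by rewrite /restU /= (last_map (fun t => inr (Tagged (fun q => St (sys q)) t) : St U)).
eexists; first by exists restU; [split; [|split]; rewrite ?hp ?hl //; apply: mulr_gt0|].
rewrite -EFinM lee_fin hp /restU /= size_map.
set q := path_prob _ _ in Hpos *.
set n := size rest.
have -> : 2 / m p * (n.+1%:R / q) = (2 * n.+1%:R) / (m p * q).
  by field; apply/andP; split; rewrite gt_eqF.
apply: ler_wpM2r; first by rewrite invr_ge0 ltW // mulr_gt0.
by rewrite -natrM ler_nat; lia.
Qed.

End Univ.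

Theorem mainTheorem3 (R : realType) (X : choiceType) (Y : Type)
    (Code : choiceType) (sys : Code -> system R X Y) (m : Code -> R)
    (m_ge0 : forall p, 0 <= m p)
    (m_sum1 : (esum [set: Code] (fun p => (m p)%:E) = 1)%E) :
  exists U : system R X Y,
    forall (f : X -> Y -> bool) (p : Code),
      solves f (sys p) -> 0 < m p ->
      exists C : R, 0 < C /\
        forall (x : X) (y : Y), f x y ->
          (proper_time U x y
             <= (C * (2 `^ (- log2 (m p))))%:E * proper_time (sys p) x y)%E.
Proof.
case: (pselect (exists p : Code, True)) => [[p0 _]|nC]; last first.
  exfalso.
  have hT : [set: Code] = set0.
    by apply/seteqP; split => // q _; apply: nC; exists q.
  by move: m_sum1; rewrite hT esum_set0 => /esym/eqP; rewrite eqe oner_eq0.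
exists (@U R X Y Code sys m m_ge0 m_sum1 p0) => f p _ hm.
have t0 : 0 < 2 `^ (- log2 (m p)) by apply: powR_gt0.
exists (2 / (m p * 2 `^ (- log2 (m p)))); split.
  by rewrite divr_gt0 // mulr_gt0.
move=> x y _.
have -> : 2 / (m p * 2 `^ (- log2 (m p))) * 2 `^ (- log2 (m p)) = 2 / m p.
  by field; apply/andP; split; rewrite gt_eqF.
exact: key.
Qed.
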